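(* Consider the scoring two-player Tower of Hanoi game on three pegs with real weights $w_{12},w_{13},w_{23}$. (a) Let $n=2$. Consider the inequalities (1) $w_{12}+w_{23}-w_{13}>0$; (2) $3w_{13}-w_{12}-w_{23}>0$; (3) $w_{13}+w_{23}-w_{12}>0$; (4) $3w_{12}-w_{13}-w_{23}>0$; (5) $w_{12}+w_{13}-w_{23}>0$. Under (EC4) or (EC5), the first player wins if at least one of (1)–(5) holds. Under (EC2) or (EC3), the first player wins if (5) holds. Under (EC1) with final peg Peg 3, the first player wins if (1) or (2) holds. In all other cases the game is a draw. (b) Let $n=1$ (so (EC2), (EC3) are not applicable). Under (EC1) with final peg Peg 3, the first player wins if $w_{13}>0$, loses if $w_{13}<0$, and the game is a tie if $w_{13}=0$. Under (EC4) or (EC5), the second player wins if $w_{12}<0$ and $w_{13}<0$; the game is a tie if at least one of $w_{12},w_{13}$ equals $0$ and both are non-positive; otherwise the first player wins.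
   Context: Tower of Hanoi on three pegs (labeled 1, 2, 3) with $n$ disks of pairwise distinct sizes: a position assigns each disk to a peg, disks on each peg stacked with sizes decreasing from bottom to top. A legal move transfers the top disk of one peg to a different peg that is empty or has a larger top disk; a move from Peg $i$ to Peg $j$ or from Peg $j$ to Peg $i$ is a move along edge $\{i,j\}$. A tower position is one with all disks on one peg. Two-player game: Anh (first player) and Bao (second player) alternate moves starting from the position with all disks on Peg 1; a player may not move the disk that the opponent moved in the immediately preceding move. The game ends when the tower has been transferred to a final peg, according to one fixed ending condition: (EC1) all disks on a given peg distinct from Peg 1; (EC2) all disks on Peg 1, the largest disk having been moved at least once; (EC3) all disks on Peg 1, the smallest disk having been moved at least once; (EC4) all disks on any peg, the largest disk having been moved at least once; (EC5) all disks on any peg, the smallest disk having been moved at least once. A move creating a tower position that does not end the game (tower on a non-final peg) is not allowed; (EC2), (EC3) are not applicable for $n=1$. Scoring play: real weights $w_{12},w_{13},w_{23}$ are given (with $w_{ij}=w_{ji}$); a player making a move along edge $\{i,j\}$ earns $w_{ij}$ points. When the game ends, the player with strictly more points wins, and equal points is a tie. A player ''wins'' the game if she/he has a strategy forcing the game to end with her/his victory; if neither player can force the game to terminate in a victory for her/himself, the game is a draw. *)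

(* Defs.v *)
From HB Require Import structures.
From mathcomp Require Import all_boot all_order all_algebra.
Set Implicit Arguments. Unset Strict Implicit. Unset Printing Implicit Defensive.
Import Order.TTheory GRing.Theory Num.Theory.
Local Open Scope ring_scope.

(* Pegs 1,2,3 are represented by the ordinals 0,1,2 of 'I_3. *)
Definition peg := 'I_3.
Definition peg1 : peg := Ordinal (isT : (0 < 3)%N).
Definition peg2 : peg := Ordinal (isT : (1 < 3)%N).
Definition peg3 : peg := Ordinal (isT : (2 < 3)%N).

(* Disks are 'I_n; disk i has size i (0 = smallest, n-1 = largest).
   A configuration assigns each disk to a peg; the stacking order on a peg
   is determined by the sizes. *)
Definition config (n : nat) := {ffun 'I_n -> peg}.

(* weight of the edge {i,j} (for i <> j): sum of labels 0+1 -> w12,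
   0+2 -> w13, 1+2 -> w23 *)
Definition wt (R : realFieldType) (w12 w13 w23 : R) (i j : peg) : R :=
  match (val i + val j)%N with
  | 1%N => w12
  | 2%N => w13
  | _ => w23
  end.

Inductive ending := EC1 of peg | EC2 | EC3 | EC4 | EC5.

Definition tower_on n (c : config n) (p : peg) : Prop := forall d, c d = p.
Definition is_tower n (c : config n) : Prop := exists p, tower_on c p.

(* The game state: configuration, disk moved in the immediately preceding
   move (None at the start), whose turn it is (true = Anh), the score
   difference (Anh's points minus Bao's points), and whether the largest /
   smallest disk has been moved at least once. *)
Record state (R : realFieldType) (n : nat) := State {
  cfg : config n;
  last_moved : option 'I_n;
  anh_turn : bool;
  diff : R;
  movedL : bool;
  movedS : bool }.

Definition init_state (R : realFieldType) n : state R n :=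
  State [ffun _ => peg1] None true 0 false false.

Definition final (R : realFieldType) n (ec : ending) (s : state R n) : Prop :=
  match ec with
  | EC1 p => tower_on (cfg s) p
  | EC2 => tower_on (cfg s) peg1 /\ movedL s
  | EC3 => tower_on (cfg s) peg1 /\ movedS s
  | EC4 => is_tower (cfg s) /\ movedL s
  | EC5 => is_tower (cfg s) /\ movedS s
  end.

Definition move_cfg n (c : config n) (d : 'I_n) (t : peg) : config n :=
  [ffun e => if e == d then t else c e].

Definition step (R : realFieldType) (w12 w13 w23 : R) n (s : state R n)
  (d : 'I_n) (t : peg) : state R n :=
  let w := wt w12 w13 w23 (cfg s d) t in
  State (move_cfg (cfg s) d t) (Some d) (~~ anh_turn s)
    (if anh_turn s then diff s + w else diff s - w)
    (movedL s || (val d == n.-1)%N) (movedS s || (val d == 0)%N).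

Definition legal (R : realFieldType) (w12 w13 w23 : R) n (ec : ending)
  (s : state R n) (d : 'I_n) (t : peg) : Prop :=
  (* d is the top (smallest) disk of its peg *)
  (forall e, cfg s e = cfg s d -> (val d <= val e)%N) /\
  t <> cfg s d /\
  (forall e, cfg s e = t -> (val d < val e)%N) /\
  last_moved s <> Some d /\
  (is_tower (move_cfg (cfg s) d t) ->
     final ec (step w12 w13 w23 s d t)).

(* forces R n ec w12 w13 w23 P good s : the player P (true = Anh,
   false = Bao) has a strategy which, from state s, forces the game to end
   (in finitely many moves) in a final state whose score difference
   satisfies good.  (Inductive = attractor; the game is finitely branching.) *)
Inductive forces (R : realFieldType) (n : nat) (ec : ending) (w12 w13 w23 : R)
  (P : bool) (good : R -> Prop) : state R n -> Prop :=
| forces_mine s :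
    anh_turn s = P ->
    (exists d t, legal w12 w13 w23 ec s d t /\
       ((final ec (step w12 w13 w23 s d t) /\ good (diff (step w12 w13 w23 s d t))) \/
        (~ final ec (step w12 w13 w23 s d t) /\
         @forces R n ec w12 w13 w23 P good (step w12 w13 w23 s d t)))) ->
    @forces R n ec w12 w13 w23 P good s
| forces_theirs s :
    anh_turn s <> P ->
    (exists d t, legal w12 w13 w23 ec s d t) ->
    (forall d t, legal w12 w13 w23 ec s d t ->
       ((final ec (step w12 w13 w23 s d t) /\ good (diff (step w12 w13 w23 s d t))) \/
        (~ final ec (step w12 w13 w23 s d t) /\
         @forces R n ec w12 w13 w23 P good (step w12 w13 w23 s d t)))) ->
    @forces R n ec w12 w13 w23 P good s.

Definition wins (R : realFieldType) (n : nat) (ec : ending) (w12 w13 w23 : R)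
  (P : bool) : Prop :=
  @forces R n ec w12 w13 w23 P (fun x => if P then 0 < x else x < 0)
    (init_state R n).

Definition anh := true.
Definition bao := false.

Definition draw (R : realFieldType) (n : nat) (ec : ending) (w12 w13 w23 : R) : Prop :=
  ~ wins n ec w12 w13 w23 anh /\ ~ wins n ec w12 w13 w23 bao.

Definition tie (R : realFieldType) (n : nat) (ec : ending) (w12 w13 w23 : R) : Prop :=
  draw n ec w12 w13 w23 /\
  @forces R n ec w12 w13 w23 anh (fun x => 0 <= x) (init_state R n) /\
  @forces R n ec w12 w13 w23 bao (fun x => x <= 0) (init_state R n).

(* Main.v *)
Require Import Defs.
From HB Require Import structures.
From mathcomp Require Import all_boot all_order all_algebra ring lra.
Import Order.TTheory GRing.Theory Num.Theory.
Local Open Scope ring_scope.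
Set Implicit Arguments. Unset Strict Implicit.

Lemma forces_ind' (R : realFieldType) (n : nat) (ec : ending) (w12 w13 w23 : R)
  (P : bool) (good : R -> Prop) (Q : state R n -> Prop) :
  (forall s, anh_turn s = P ->
    (exists d t, legal w12 w13 w23 ec s d t /\
       ((final ec (step w12 w13 w23 s d t) /\ good (diff (step w12 w13 w23 s d t))) \/
        (~ final ec (step w12 w13 w23 s d t) /\ Q (step w12 w13 w23 s d t)))) -> Q s) ->
  (forall s, anh_turn s <> P ->
    (exists d t, legal w12 w13 w23 ec s d t) ->
    (forall d t, legal w12 w13 w23 ec s d t ->
       ((final ec (step w12 w13 w23 s d t) /\ good (diff (step w12 w13 w23 s d t))) \/
        (~ final ec (step w12 w13 w23 s d t) /\ Q (step w12 w13 w23 s d t)))) -> Q s) ->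
  forall s, @forces R n ec w12 w13 w23 P good s -> Q s.
Proof.
move=> Hm Ht; fix IH 2 => s H; destruct H as [s e ex|s e ex all].
- apply: Hm e _; destruct ex as [d [t [Hl [Hf|[Hnf Hfo]]]]].
  + by exists d, t; split => //; left.
  + by exists d, t; split => //; right; split => //; apply: IH.
- apply: Ht e ex _ => d t Hl; destruct (all d t Hl) as [Hf|[Hnf Hfo]].
  + by left.
  + by right; split => //; apply: IH.
Qed.

Definition d0 : 'I_2 := Ordinal (isT : (0 < 2)%N).
Definition d1 : 'I_2 := Ordinal (isT : (1 < 2)%N).

Lemma disk2 (d : 'I_2) : d = d0 \/ d = d1.
Proof. by case: d => [[|[|//]]] H; [left|right]; apply: val_inj. Qed.

Lemma pegc (p : peg) : p = peg1 \/ p = peg2 \/ p = peg3.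
Proof. by case: p => [[|[|[|//]]]] H; [left|right;left|right;right]; apply: val_inj. Qed.

Definition cf (a b : peg) : config 2 := [ffun e : 'I_2 => if val e == 0%N then a else b].

Definition third (a b : peg) : peg :=
  match (val a + val b)%N with 1%N => peg3 | 2%N => peg2 | _ => peg1 end.

Lemma third_ne (a b : peg) : a <> b -> third a b <> a /\ third a b <> b.
Proof.
by case: (pegc a) => [->|[->|->]]; case: (pegc b) => [->|[->|->]].
Qed.

Lemma third_eq (a b t : peg) : t <> a -> t <> b -> a <> b -> t = third a b.
Proof.
by case: (pegc a) => [->|[->|->]]; case: (pegc b) => [->|[->|->]];
   case: (pegc t) => [->|[->|->]].
Qed.

Lemma thirdC (a b : peg) : third a b = third b a.
Proof. by rewrite /third addnC. Qed.

Lemma third_third (a b : peg) : a <> b -> third (third a b) b = a.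
Proof. by case: (pegc a) => [->|[->|->]]; case: (pegc b) => [->|[->|->]]. Qed.

Lemma wtC (R : realFieldType) (w12 w13 w23 : R) a b : wt w12 w13 w23 a b = wt w12 w13 w23 b a.
Proof. by rewrite /wt addnC. Qed.
Definition AnhSt (R : realFieldType) (a b : peg) (x : R) : state R 2 :=
  State (cf a b) (Some d1) true x true true.
Definition BaoSt (R : realFieldType) (c b : peg) (ml : bool) (x : R) : state R 2 :=
  State (cf c b) (Some d0) false x ml true.

Arguments AnhSt {R}.
Arguments BaoSt {R}.

Lemma cf0 a b : cf a b d0 = a. Proof. by rewrite ffunE. Qed.
Lemma cf1 a b : cf a b d1 = b. Proof. by rewrite ffunE. Qed.

Lemma tower_cf a b p : tower_on (cf a b) p -> a = p /\ b = p.
Proof. by move=> H; split; [rewrite -(cf0 a b) | rewrite -(cf1 a b)]; apply: H. Qed.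

Lemma tower_cfI a p : tower_on (cf a a) p <-> a = p.
Proof.
split; first by case/tower_cf.
by move=> -> e; rewrite ffunE; case: ifP.
Qed.

Lemma move_cf0 a b t : move_cfg (cf a b) d0 t = cf t b.
Proof.
apply/ffunP => e; rewrite !ffunE; case: (disk2 e) => ->; by rewrite ?cf0 ?cf1.
Qed.
Lemma move_cf1 a b t : move_cfg (cf a b) d1 t = cf a t.
Proof.
apply/ffunP => e; rewrite !ffunE; case: (disk2 e) => ->; by rewrite ?cf0 ?cf1.
Qed.
Lemma move_init t : move_cfg [ffun _ : 'I_2 => peg1] d0 t = cf t peg1.
Proof.
apply/ffunP => e; rewrite !ffunE; case: (disk2 e) => ->; by rewrite ?cf0 ?cf1.
Qed.

Definition finalok (ec : ending) (b : peg) : Prop :=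
  match ec with EC1 p => b = p | EC2 | EC3 => b = peg1 | _ => True end.

Ltac decomp H := repeat match goal with
  | H : _ /\ _ |- _ => destruct H
  | H : exists _, _ |- _ => destruct H
  | H : is_tower _ |- _ => destruct H
  | H : tower_on (cf _ _) _ |- _ => apply tower_cf in H
  end.

Lemma final_anh (R : realFieldType) ec (a b : peg) (x : R) : a <> b -> ~ final ec (AnhSt a b x).
Proof.
move=> ab; case: ec => [p| | | |] /= H; decomp H; congruence.
Qed.

Lemma final_bao (R : realFieldType) ec (c b : peg) (ml : bool) (x : R) :
  final ec (BaoSt c b ml x) -> c = b /\ (ml -> finalok ec b).
Proof.
case: ec => [p| | | |] /= H; decomp H; subst; split => //.
Qed.

Lemma final_baoI (R : realFieldType) ec (b : peg) (x : R) :
  finalok ec b -> final ec (BaoSt b b true x).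
Proof.
case: ec => [p| | | |] /= H; rewrite ?tower_cfI //; do ? split => //;
 by exists b; apply/tower_cfI.
Qed.
Section L.
End L.

Lemma step_anh (R : realFieldType) (w12 w13 w23 : R) (a b t : peg) (x : R) :
  step w12 w13 w23 (AnhSt a b x) d0 t = BaoSt t b true (x + wt w12 w13 w23 a t).
Proof. by rewrite /step /= move_cf0 cf0. Qed.

Lemma step_bao (R : realFieldType) (w12 w13 w23 : R) (c b t : peg) ml (x : R) :
  step w12 w13 w23 (BaoSt c b ml x) d1 t = AnhSt c t (x - wt w12 w13 w23 b t).
Proof. by rewrite /step /= move_cf1 cf1 orbT. Qed.

Lemma step_init (R : realFieldType) (w12 w13 w23 : R) (t : peg) :
  step w12 w13 w23 (init_state R 2) d0 t = BaoSt t peg1 false (0 + wt w12 w13 w23 peg1 t).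
Proof. by rewrite /step /= move_init ffunE. Qed.

Lemma legal_anh (R : realFieldType) (w12 w13 w23 : R) ec (a b : peg) (x : R) d t :
  legal w12 w13 w23 ec (AnhSt a b x) d t -> d = d0 /\ t <> a.
Proof.
move=> [_ [Ht [_ [Hl _]]]]; case: (disk2 d) => Hd; subst d => //.
by split => //; rewrite /= cf0 in Ht.
Qed.

Lemma legal_anhI (R : realFieldType) (w12 w13 w23 : R) ec (a b : peg) (x : R) t :
  a <> b -> t <> a -> (t = b -> finalok ec b) -> legal w12 w13 w23 ec (AnhSt a b x) d0 t.
Proof.
move=> ab ta tb; split; first by [].
split; first by rewrite /= cf0.
split.
  move=> e /=; case: (disk2 e) => ->; rewrite ?cf0 ?cf1 // => E; congruence.
split; first by [].
rewrite move_cf0 step_anh => -[p /tower_cf [E1 E2]]; subst.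
by apply: final_baoI; apply: tb.
Qed.

Lemma legal_bao (R : realFieldType) (w12 w13 w23 : R) ec (c b : peg) ml (x : R) d t :
  c <> b -> legal w12 w13 w23 ec (BaoSt c b ml x) d t -> d = d1 /\ t = third c b.
Proof.
move=> cb [_ [Ht [Hg [Hl _]]]]; case: (disk2 d) => Hd; subst d => //.
split => //; rewrite /= cf1 in Ht.
apply: third_eq => // E; subst t.
by move: (Hg d0); rewrite /= cf0 => /(_ erefl).
Qed.

Lemma legal_baoI (R : realFieldType) (w12 w13 w23 : R) ec (c b : peg) ml (x : R) :
  c <> b -> legal w12 w13 w23 ec (BaoSt c b ml x) d1 (third c b).
Proof.
move=> cb; have [t1 t2] := third_ne cb.
split.
  move=> e /=; case: (disk2 e) => ->; rewrite ?cf0 ?cf1 // => E; congruence.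
split; first by rewrite /= cf1.
split.
  by move=> e /=; case: (disk2 e) => ->; rewrite ?cf0 ?cf1 // => E; congruence.
split; first by [].
rewrite move_cf1 => -[p /tower_cf [E1 E2]]; subst.
congruence.
Qed.

Lemma legal_init (R : realFieldType) (w12 w13 w23 : R) ec d t :
  legal w12 w13 w23 ec (init_state R 2) d t -> d = d0 /\ t <> peg1.
Proof.
move=> [Htop [Ht _]]; case: (disk2 d) => Hd; subst d.
  by split => //; rewrite /= ffunE in Ht.
by move: (Htop d0); rewrite /= !ffunE => /(_ erefl).
Qed.

Lemma legal_initI (R : realFieldType) (w12 w13 w23 : R) ec t :
  t <> peg1 -> legal w12 w13 w23 ec (init_state R 2) d0 t.
Proof.
move=> tp; split; first by [].
split; first by rewrite /= ffunE.
split; first by move=> e /=; rewrite ffunE => E; congruence.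
split; first by [].
rewrite move_init => -[p /tower_cf [E1 E2]]; subst.
congruence.
Qed.
Definition Pv (R : realFieldType) (w12 w13 w23 : R) (a b : peg) : R :=
  match val a, val b with
  | 1%N, 2%N => w12 - w13
  | 0%N, 1%N => w12 + w12 - w13 - w23
  | 2%N, 0%N => w12 - w23
  | 2%N, 1%N => w13 - w12
  | 0%N, 2%N => w13 + w13 - w12 - w23
  | 1%N, 0%N => w13 - w23
  | _, _ => 0
  end.

Arguments Pv {R}.
Lemma I0 (R : realFieldType) (w12 w13 w23 : R) (t : peg) : t <> peg1 ->
  0 + wt w12 w13 w23 peg1 t - wt w12 w13 w23 peg1 (third t peg1) = Pv w12 w13 w23 t (third t peg1).
Proof.
by case: (pegc t) => [->|[->|->]] //= _; rewrite /wt /Pv /=; ring.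
Qed.

Lemma I2 (R : realFieldType) (w12 w13 w23 : R) (a b : peg) : a <> b ->
  Pv w12 w13 w23 a b + wt w12 w13 w23 a (third a b) - wt w12 w13 w23 b a
  = Pv w12 w13 w23 (third a b) a.
Proof.
by case: (pegc a) => [->|[->|->]]; case: (pegc b) => [->|[->|->]] //= _;
  rewrite /wt /Pv /=; ring.
Qed.

Definition Inv (R : realFieldType) (w12 w13 w23 : R) (s : state R 2) : Prop :=
  s = init_state R 2 \/
  (exists a b, a <> b /\ s = AnhSt a b (Pv w12 w13 w23 a b)) \/
  (exists a b ml, a <> b /\
     s = BaoSt (third a b) b ml (Pv w12 w13 w23 a b + wt w12 w13 w23 a (third a b))) \/
  (exists t, t <> peg1 /\ s = BaoSt t peg1 false (0 + wt w12 w13 w23 peg1 t)).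

Definition FV (R : realFieldType) (w12 w13 w23 : R) ec (x : R) : Prop :=
  exists a b, a <> b /\ finalok ec b /\ x = Pv w12 w13 w23 a b + wt w12 w13 w23 a b.

Arguments Inv {R}.
Arguments FV {R}.

Lemma step_cases (R : realFieldType) (w12 w13 w23 : R) ec s d t :
  Inv w12 w13 w23 s -> legal w12 w13 w23 ec s d t ->
  (~ final ec (step w12 w13 w23 s d t) /\ Inv w12 w13 w23 (step w12 w13 w23 s d t)) \/
  (final ec (step w12 w13 w23 s d t) /\ anh_turn s /\
   FV w12 w13 w23 ec (diff (step w12 w13 w23 s d t))).
Proof.
case=> [->|[[a [b [ab ->]]]|[[a [b [ml [ab ->]]]]|[t0 [tp ->]]]]] Hl.
- have [? Ht] := legal_init Hl; subst d; rewrite step_init; left; split.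
    by move/final_bao => [].
  by right; right; right; exists t.
- have [? Ht] := legal_anh Hl; subst d; rewrite step_anh.
  have Hfin := proj2 (proj2 (proj2 (proj2 Hl))).
  rewrite /= move_cf0 step_anh in Hfin.
  case: (t =P b) => tb.
    subst t; right.
    have Hf : final ec (BaoSt b b true (Pv w12 w13 w23 a b + wt w12 w13 w23 a b)).
      by apply: Hfin; exists b; apply/tower_cfI.
    split => //; split => //; have [_ /(_ erefl) ok] := final_bao Hf.
    by exists a, b.
  left; split; first by move/final_bao => [].
  right; right; left; exists a, b, true; split => //.
  by rewrite -(third_eq Ht tb ab).
- have [ta tb0] := third_ne ab.
  have [? ?] := legal_bao tb0 Hl; subst d t.
  rewrite step_bao third_third //; left; split.
    by apply: final_anh.
  right; left; exists (third a b), a; split => //.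
  by rewrite I2.
- have [? ?] := legal_bao tp Hl; subst d t.
  have [ta tb0] := third_ne tp.
  rewrite step_bao; left; split.
    by apply: final_anh; apply: not_eq_sym.
  right; left; exists t0, (third t0 peg1); split; first by apply: not_eq_sym.
  by rewrite I0.
Qed.
Lemma no_win_anh (R : realFieldType) (w12 w13 w23 : R) ec (good : R -> Prop) :
  (forall x, FV w12 w13 w23 ec x -> ~ good x) ->
  ~ @forces R 2 ec w12 w13 w23 anh good (init_state R 2).
Proof.
move=> Hg H.
suff : Inv w12 w13 w23 (init_state R 2) -> False by apply; left.
move: H; apply: (forces_ind' (Q := fun s => Inv w12 w13 w23 s -> False)).
- move=> s _ [d [t [Hl Hb]]] Hi.
  case: (step_cases Hi Hl) => [[Hnf Hi']|[Hf [_ Hfv]]]; case: Hb => [[Hf' Hgd]|[Hnf' HQ]].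
  + by apply: Hnf.
  + by apply: HQ.
  + by apply: (Hg _ Hfv).
  + by apply: Hnf'.
- move=> s _ [d [t Hl]] Hall Hi.
  case: (step_cases Hi Hl) => [[Hnf Hi']|[Hf [_ Hfv]]]; case: (Hall d t Hl) => [[Hf' Hgd]|[Hnf' HQ]].
  + by apply: Hnf.
  + by apply: HQ.
  + by apply: (Hg _ Hfv).
  + by apply: Hnf'.
Qed.

Lemma no_win_bao (R : realFieldType) (w12 w13 w23 : R) ec (good : R -> Prop) :
  ~ @forces R 2 ec w12 w13 w23 bao good (init_state R 2).
Proof.
move=> H.
suff : Inv w12 w13 w23 (init_state R 2) -> False by apply; left.
move: H; apply: (forces_ind' (Q := fun s => Inv w12 w13 w23 s -> False)).
- move=> s Ht [d [t [Hl Hb]]] Hi.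
  case: (step_cases Hi Hl) => [[Hnf Hi']|[Hf [Ha Hfv]]].
    by case: Hb => [[Hf' _]|[_ HQ]]; [apply: Hnf | apply: HQ].
  by rewrite Ht in Ha.
- move=> s Ht _ Hall Hi.
  have Hcirc : exists d t, legal w12 w13 w23 ec s d t /\ ~ final ec (step w12 w13 w23 s d t).
    case: Hi => [->|[[a [b [ab ->]]]|[[a [b [ml [ab E]]]]|[t0 [tp E]]]]]; try by rewrite E in Ht.
    - exists d0, peg2; split; first by apply: legal_initI.
      by rewrite step_init => /final_bao [].
    - have [ta tb] := third_ne ab.
      exists d0, (third a b); split.
        by apply: legal_anhI => // /tb.
      by rewrite step_anh => /final_bao [].
  case: Hcirc => [d [t [Hl Hnf]]].
  case: (step_cases Hi Hl) => [[_ Hi']|[Hf _]]; last by [].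
  by case: (Hall d t Hl) => [[Hf _]|[_ HQ]]; [apply: Hnf | apply: HQ].
Qed.

Lemma win_anh_state (R : realFieldType) (w12 w13 w23 : R) ec (good : R -> Prop) (a b : peg) :
  a <> b ->
  ((finalok ec b /\ good (Pv w12 w13 w23 a b + wt w12 w13 w23 a b)) \/
   @forces R 2 ec w12 w13 w23 anh good (AnhSt (third a b) a (Pv w12 w13 w23 (third a b) a))) ->
  @forces R 2 ec w12 w13 w23 anh good (AnhSt a b (Pv w12 w13 w23 a b)).
Proof.
move=> ab [[ok Hg]|Hf].
  apply: forces_mine => //; exists d0, b; split.
    by apply: legal_anhI => //; apply: not_eq_sym.
  by left; rewrite step_anh; split => //; apply: final_baoI.
have [ta tb] := third_ne ab.
apply: forces_mine => //; exists d0, (third a b); split.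
  by apply: legal_anhI => // /tb.
right; rewrite step_anh; split; first by move/final_bao => [].
apply: forces_theirs => //.
  by exists d1, (third (third a b) b); apply: legal_baoI.
move=> d t Hl; have [? ?] := legal_bao tb Hl; subst d t.
right; rewrite step_bao third_third //; split; first by apply: final_anh.
by rewrite I2.
Qed.

Lemma win_init (R : realFieldType) (w12 w13 w23 : R) ec (good : R -> Prop) (x : peg) :
  x <> peg1 ->
  @forces R 2 ec w12 w13 w23 anh good (AnhSt x (third x peg1) (Pv w12 w13 w23 x (third x peg1))) ->
  @forces R 2 ec w12 w13 w23 anh good (init_state R 2).
Proof.
move=> xp Hf.
apply: forces_mine => //; exists d0, x; split; first by apply: legal_initI.
right; rewrite step_init; split; first by move/final_bao => [].
apply: forces_theirs => //.
  by exists d1, (third x peg1); apply: legal_baoI.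
move=> d t Hl; have [? ?] := legal_bao xp Hl; subst d t.
right; rewrite step_bao; split.
  by apply: final_anh; have [] := third_ne xp; move=> H _; apply: not_eq_sym.
by rewrite I0.
Qed.
Lemma o1 (d : 'I_1) : d = ord0.
Proof. by apply: val_inj; case: d => [[|]]. Qed.

Lemma n1_move (d : 'I_1) t : move_cfg [ffun _ : 'I_1 => peg1] d t = [ffun _ => t].
Proof. by apply/ffunP => e; rewrite !ffunE (o1 e) (o1 d) eqxx. Qed.

Lemma n1_diff (R : realFieldType) (w12 w13 w23 : R) d t :
  diff (step w12 w13 w23 (init_state R 1) d t) = 0 + wt w12 w13 w23 peg1 t.
Proof. by rewrite /= ffunE. Qed.

Lemma n1_legal (R : realFieldType) (w12 w13 w23 : R) ec d t :
  legal w12 w13 w23 ec (init_state R 1) d t <->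
  t <> peg1 /\ final ec (step w12 w13 w23 (init_state R 1) d t).
Proof.
split.
  move=> [_ [Ht [_ [_ Hf]]]]; rewrite /= ffunE in Ht; split => //.
  by apply: Hf; exists t => e; rewrite n1_move ffunE.
move=> [tp Hf]; split.
  by move=> e _; rewrite (o1 e) (o1 d).
split; first by rewrite /= ffunE.
split; first by move=> e /=; rewrite ffunE => E; congruence.
by split.
Qed.

Lemma n1_fin1 (R : realFieldType) (w12 w13 w23 : R) d t :
  final (EC1 peg3) (step w12 w13 w23 (init_state R 1) d t) <-> t = peg3.
Proof.
rewrite /= n1_move; split; first by move/(_ d); rewrite ffunE.
by move=> -> e; rewrite ffunE.
Qed.

Lemma n1_fin45 (R : realFieldType) (w12 w13 w23 : R) ec d t :
  ec = EC4 \/ ec = EC5 -> final ec (step w12 w13 w23 (init_state R 1) d t).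
Proof.
move=> [->|->] /=; rewrite n1_move (o1 d) /=; split => //; exists t => e; by rewrite ffunE.
Qed.

Lemma n1_anh (R : realFieldType) (w12 w13 w23 : R) ec (good : R -> Prop) :
  @forces R 1 ec w12 w13 w23 anh good (init_state R 1) <->
  exists t, t <> peg1 /\ final ec (step w12 w13 w23 (init_state R 1) ord0 t) /\
    good (0 + wt w12 w13 w23 peg1 t).
Proof.
split.
  move=> H; inversion H as [s e ex Es|s e ex all Es]; subst; last by case: e.
  case: ex => [d [t [Hl Hb]]].
  have [tp Hf] := proj1 (n1_legal _ _ _ _ _ _) Hl.
  case: Hb => [[_ Hg]|[Hnf _]]; last by [].
  by exists t; rewrite -(o1 d) -(n1_diff w12 w13 w23 d).
move=> [t [tp [Hf Hg]]]; apply: forces_mine => //; exists ord0, t; split.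
  by apply/n1_legal.
by left; rewrite n1_diff.
Qed.

Lemma n1_bao (R : realFieldType) (w12 w13 w23 : R) ec (good : R -> Prop) :
  @forces R 1 ec w12 w13 w23 bao good (init_state R 1) <->
  (exists t, t <> peg1 /\ final ec (step w12 w13 w23 (init_state R 1) ord0 t)) /\
  (forall t, t <> peg1 -> final ec (step w12 w13 w23 (init_state R 1) ord0 t) ->
    good (0 + wt w12 w13 w23 peg1 t)).
Proof.
split.
  move=> H; inversion H as [s e ex Es|s e ex Hall Es]; subst; first by [].
  case: ex => [d [t Hl]].
  split.
    by exists t; rewrite -(o1 d); apply/n1_legal.
  move=> t' tp Hf; case: (Hall ord0 t').
  - by apply/n1_legal.
  - by rewrite n1_diff => -[].
  - by case.
move=> [[t [tp Hf]] Hall]; apply: forces_theirs => //.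
  by exists ord0, t; apply/n1_legal.
move=> d t' /n1_legal [tp' Hf']; left; rewrite n1_diff; split => //.
by apply: Hall => //; rewrite (o1 d) in Hf'.
Qed.
Lemma ne12 : peg1 <> peg2. Proof. by move/(congr1 val). Qed.
Lemma ne13 : peg1 <> peg3. Proof. by move/(congr1 val). Qed.
Lemma ne23 : peg2 <> peg3. Proof. by move/(congr1 val). Qed.
Lemma ne21 : peg2 <> peg1. Proof. by move/(congr1 val). Qed.
Lemma ne31 : peg3 <> peg1. Proof. by move/(congr1 val). Qed.
Lemma ne32 : peg3 <> peg2. Proof. by move/(congr1 val). Qed.
Hint Resolve ne12 ne13 ne23 ne21 ne31 ne32 : core.

Lemma th12 : third peg1 peg2 = peg3. Proof. by []. Qed.
Lemma th21 : third peg2 peg1 = peg3. Proof. by []. Qed.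
Lemma th13 : third peg1 peg3 = peg2. Proof. by []. Qed.
Lemma th31 : third peg3 peg1 = peg2. Proof. by []. Qed.
Lemma th23 : third peg2 peg3 = peg1. Proof. by []. Qed.
Lemma th32 : third peg3 peg2 = peg1. Proof. by []. Qed.
Ltac th := rewrite ?th12 ?th21 ?th13 ?th31 ?th23 ?th32.

Lemma pathA (R : realFieldType) (w12 w13 w23 : R) ec (good : R -> Prop) :
  (finalok ec peg3 /\ good (w12 - w13 + w23)) \/
  (finalok ec peg2 /\ good (w12 + w12 - w13 - w23 + w12)) \/
  (finalok ec peg1 /\ good (w12 - w23 + w13)) ->
  @forces R 2 ec w12 w13 w23 anh good (init_state R 2).
Proof.
move=> H; apply: (win_init (x:=peg2)) => //; th.
apply: win_anh_state => //; th.
case: H => [H|H]; first by left.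
right; apply: win_anh_state => //; th.
case: H => [H|H]; first by left.
right; apply: win_anh_state => //; th.
by left.
Qed.

Lemma pathB (R : realFieldType) (w12 w13 w23 : R) ec (good : R -> Prop) :
  (finalok ec peg2 /\ good (w13 - w12 + w23)) \/
  (finalok ec peg3 /\ good (w13 + w13 - w12 - w23 + w13)) \/
  (finalok ec peg1 /\ good (w13 - w23 + w12)) ->
  @forces R 2 ec w12 w13 w23 anh good (init_state R 2).
Proof.
move=> H; apply: (win_init (x:=peg3)) => //; th.
apply: win_anh_state => //; th.
case: H => [H|H]; first by left.
right; apply: win_anh_state => //; th.
case: H => [H|H]; first by left.
right; apply: win_anh_state => //; th.
by left.
Qed.
Lemma FVe (R : realFieldType) (w12 w13 w23 : R) ec x :
  FV w12 w13 w23 ec x ->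
  (finalok ec peg3 /\ (x = w12 - w13 + w23 \/ x = w13 + w13 - w12 - w23 + w13)) \/
  (finalok ec peg2 /\ (x = w13 - w12 + w23 \/ x = w12 + w12 - w13 - w23 + w12)) \/
  (finalok ec peg1 /\ (x = w12 - w23 + w13 \/ x = w13 - w23 + w12)).
Proof.
move=> [a [b [ab [ok ->]]]].
case: (pegc a) ab ok => [->|[->|->]]; case: (pegc b) => [->|[->|->]] // _ ok.
- by right; left; split => //; right.
- by left; split => //; right.
- by right; right; split => //; right.
- by left; split => //; left.
- by right; right; split => //; left.
- by right; left; split => //; left.
Qed.

Lemma nlt (R : realFieldType) (e : R) : ~ (0 < e) -> e <= 0.
Proof. by move/negP; rewrite -leNgt. Qed.

Unset Implicit Arguments.
Theorem theorem3 (R : realFieldType) (w12 w13 w23 : R) :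
  (* (a) n = 2 *)
  (let c1 := 0 < w12 + w23 - w13 in
   let c2 := 0 < 3%:R * w13 - w12 - w23 in
   let c3 := 0 < w13 + w23 - w12 in
   let c4 := 0 < 3%:R * w12 - w13 - w23 in
   let c5 := 0 < w12 + w13 - w23 in
   (forall ec, ec = EC4 \/ ec = EC5 ->
      ((c1 \/ c2 \/ c3 \/ c4 \/ c5) -> wins 2 ec w12 w13 w23 anh) /\
      (~ (c1 \/ c2 \/ c3 \/ c4 \/ c5) -> draw 2 ec w12 w13 w23)) /\
   (forall ec, ec = EC2 \/ ec = EC3 ->
      (c5 -> wins 2 ec w12 w13 w23 anh) /\
      (~ c5 -> draw 2 ec w12 w13 w23)) /\
   ((c1 \/ c2 -> wins 2 (EC1 peg3) w12 w13 w23 anh) /\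
    (~ (c1 \/ c2) -> draw 2 (EC1 peg3) w12 w13 w23))) /\
  (* (b) n = 1 *)
  (((0 < w13 -> wins 1 (EC1 peg3) w12 w13 w23 anh) /\
    (w13 < 0 -> wins 1 (EC1 peg3) w12 w13 w23 bao) /\
    (w13 = 0 -> tie 1 (EC1 peg3) w12 w13 w23)) /\
   (forall ec, ec = EC4 \/ ec = EC5 ->
      (w12 < 0 /\ w13 < 0 -> wins 1 ec w12 w13 w23 bao) /\
      ((w12 = 0 \/ w13 = 0) /\ w12 <= 0 /\ w13 <= 0 -> tie 1 ec w12 w13 w23) /\
      (~ (w12 < 0 /\ w13 < 0) ->
       ~ ((w12 = 0 \/ w13 = 0) /\ w12 <= 0 /\ w13 <= 0) ->
       wins 1 ec w12 w13 w23 anh))).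
Proof.
Proof.
cbv zeta; split.
  split.
    move=> ec Hec; have ok : forall p, finalok ec p by case: Hec => ->.
    split.
      move=> H; rewrite /wins.
      case: H => [c|[c|[c|[c|c]]]].
      - by apply: pathA; left; split => //=; lra.
      - by apply: pathB; right; left; split => //=; lra.
      - by apply: pathB; left; split => //=; lra.
      - by apply: pathA; right; left; split => //=; lra.
      - by apply: pathA; right; right; split => //=; lra.
    move=> H; split; last by apply: no_win_bao.
    have n1 := nlt (fun h => H (or_introl h)).
    have n2 := nlt (fun h => H (or_intror (or_introl h))).
    have n3 := nlt (fun h => H (or_intror (or_intror (or_introl h)))).
    have n4 := nlt (fun h => H (or_intror (or_intror (or_intror (or_introl h))))).
    have n5 := nlt (fun h => H (or_intror (or_intror (or_intror (or_intror h))))).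
    apply: no_win_anh => x /FVe Hx /=; apply/negP; rewrite -leNgt.
    by case: Hx => [[_ [->|->]]|[[_ [->|->]]|[_ [->|->]]]]; lra.
  split.
    move=> ec Hec; split.
      move=> c; rewrite /wins.
      by apply: pathA; right; right; split; [case: Hec => -> | rewrite /=; lra].
    move=> H; split; last by apply: no_win_bao.
    have n5 := nlt H.
    apply: no_win_anh => x /FVe Hx /=; apply/negP; rewrite -leNgt.
    case: Hx => [[ok _]|[[ok _]|[_ [->|->]]]]; try lra.
      by case: Hec ok => -> /=.
    by case: Hec ok => -> /=.
  split.
    move=> H; rewrite /wins.
    case: H => [c|c].
    - by apply: pathA; left; split => //=; lra.
    - by apply: pathB; right; left; split => //=; lra.
  move=> H; split; last by apply: no_win_bao.
  have n1 := nlt (fun h => H (or_introl h)).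
  have n2 := nlt (fun h => H (or_intror h)).
  apply: no_win_anh => x /FVe Hx /=; apply/negP; rewrite -leNgt.
  by case: Hx => [[_ [->|->]]|[[ok _]|[ok _]]]; try lra.
split.
  split.
    move=> h; apply/n1_anh; exists peg3; split => //; split; first by apply/n1_fin1.
    by rewrite /anh /wt /=; lra.
  split.
    move=> h; apply/n1_bao; split.
      by exists peg3; split => //; apply/n1_fin1.
    by move=> t _ /n1_fin1 ->; rewrite /wt /=; lra.
  move=> h; split; [split|split].
  - by move/n1_anh => [t [_ [/n1_fin1 -> g]]]; move: g; rewrite /wt /=; lra.
  - by move/n1_bao => [_ Hb]; have := Hb peg3 ne31 (proj2 (n1_fin1 _ _ _ _ _) erefl); rewrite /wt /=; lra.
  - apply/n1_anh; exists peg3; split => //; split; first by apply/n1_fin1.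
    by rewrite /wt /=; lra.
  - apply/n1_bao; split.
      by exists peg3; split => //; apply/n1_fin1.
    by move=> t _ /n1_fin1 ->; rewrite /wt /=; lra.
move=> ec Hec; split.
  move=> [h1 h2]; apply/n1_bao; split.
    by exists peg2; split => //; apply: n1_fin45.
  move=> t tp _; case: (pegc t) tp => [->|[->|->]] // _; rewrite /wt /=; lra.
split.
  move=> [hz [h1 h2]]; split; [split|split].
  - move/n1_anh => [t [tp [_ g]]]; move: g.
    by case: (pegc t) tp => [->|[->|->]] // _; rewrite /wt /=; lra.
  - have f2 : final ec (step w12 w13 w23 (init_state R 1) ord0 peg2) by apply: n1_fin45.
    have f3 : final ec (step w12 w13 w23 (init_state R 1) ord0 peg3) by apply: n1_fin45.
    move/n1_bao => [_ Hb]; move: (Hb peg2 ne21 f2) (Hb peg3 ne31 f3).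
    by rewrite /wt /=; case: hz => ->; lra.
  - apply/n1_anh; case: hz => E.
      exists peg2; split => //; split; first by apply: n1_fin45.
      by rewrite /wt /=; lra.
    exists peg3; split => //; split; first by apply: n1_fin45.
    by rewrite /wt /=; lra.
  - apply/n1_bao; split.
      by exists peg2; split => //; apply: n1_fin45.
    move=> t tp _; case: (pegc t) tp => [->|[->|->]] // _; rewrite /wt /=; lra.
move=> H1 H2.
have [g|g] : 0 < w12 \/ 0 < w13.
  case: (lerP w12 0) => h12; last by left.
  case: (lerP w13 0) => h13; last by right.
  exfalso; case: (w12 =P 0) => e12.
    by apply: H2; split => //; left.
  case: (w13 =P 0) => e13.
    by apply: H2; split => //; right.
  apply: H1; split; rewrite lt_neqAle; apply/andP; split => //; apply/eqP => //.
- apply/n1_anh; exists peg2; split => //; split; first by apply: n1_fin45.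
  by rewrite /wt /=; lra.
- apply/n1_anh; exists peg3; split => //; split; first by apply: n1_fin45.
  by rewrite /wt /=; lra.
Qed.
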